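(* For every $\alpha\in(0,\pi/2)$ and every good input, the cost of the Straight-Up algorithm equals $\cot\alpha$.
   Context: A drone with half angle-of-view $\alpha\in(0,\pi/2)$ at a point $(t_x,t_y)$, $t_y\ge0$, covers $[t_x-t_y\tan\alpha,t_x+t_y\tan\alpha]$ on the $x$-axis. An input is a sequence $X_0=(0,0),X_1,\dots,X_n$ ($n\ge1$) of points $X_i=(x_i,0)$ revealed online. A solution is a sequence of positions $P_0=(0,0),P_1,\dots,P_n$ in the closed upper half-plane with $P_i$ covering $X_0,\dots,X_i$; its cost is $\sum_i|P_iP_{i+1}|$. A request $X_{i+1}$ is redundant if $x_{i+1}\in[\min_{j\le i}x_j,\max_{j\le i}x_j]$. An input is good if it has no redundant requests, $\min_j x_j=-1$ and $\max_j x_j\in[0,1]$. The Straight-Up algorithm sets $P_i$ to be the lowest point of the $y$-axis that covers $X_0,\dots,X_i$. *)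

(* Defs.v *)
From Stdlib Require Import Reals Lra.
Open Scope R_scope.

Definition point := (R * R)%type.

(* Drone at t = (tx,ty), ty >= 0, with half angle-of-view alpha covers
   [tx - ty tan alpha, tx + ty tan alpha] on the x-axis. *)
Definition covers (alpha : R) (t : point) (x : R) : Prop :=
  0 <= snd t /\
  fst t - snd t * tan alpha <= x <= fst t + snd t * tan alpha.

(* P covers X_0, ..., X_i  (requests X_j = (x j, 0)). *)
Definition covers_upto (alpha : R) (x : nat -> R) (i : nat) (t : point) : Prop :=
  forall j, (j <= i)%nat -> covers alpha t (x j).

Definition dist (p q : point) : R :=
  sqrt ((fst p - fst q) ^ 2 + (snd p - snd q) ^ 2).

Fixpoint cost (P : nat -> point) (n : nat) : R :=
  match n with
  | O => 0
  | S k => cost P k + dist (P k) (P (S k))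
  end.

Fixpoint pmin (x : nat -> R) (i : nat) : R :=
  match i with
  | O => x O
  | S k => Rmin (pmin x k) (x (S k))
  end.
Fixpoint pmax (x : nat -> R) (i : nat) : R :=
  match i with
  | O => x O
  | S k => Rmax (pmax x k) (x (S k))
  end.

Definition input (x : nat -> R) (n : nat) : Prop := (1 <= n)%nat /\ x O = 0.

Definition redundant (x : nat -> R) (i : nat) : Prop :=
  pmin x i <= x (S i) <= pmax x i.

Definition good (x : nat -> R) (n : nat) : Prop :=
  input x n /\
  (forall i, (i < n)%nat -> ~ redundant x i) /\
  pmin x n = -1 /\ 0 <= pmax x n <= 1.

Definition lowest_on_y_axis (alpha : R) (x : nat -> R) (i : nat) (t : point) : Prop :=
  fst t = 0 /\ covers_upto alpha x i t /\
  forall y, 0 <= y -> covers_upto alpha x i (0, y) -> snd t <= y.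

Definition straight_up (alpha : R) (x : nat -> R) (n : nat) (P : nat -> point) : Prop :=
  forall i, (i <= n)%nat -> lowest_on_y_axis alpha x i (P i).

(* Main.v *)
Require Import Defs.
From Stdlib Require Import Reals Lra Lia.
Open Scope R_scope.

Lemma pbounds (x : nat -> R) i j : (j <= i)%nat -> pmin x i <= x j <= pmax x i.
Proof.
  induction i as [|i IH]; intro Hj.
  - assert (j = 0%nat) by lia; subst; simpl; lra.
  - simpl. destruct (Nat.eq_dec j (S i)) as [->|Hne].
    + split; [apply Rmin_r | apply Rmax_r].
    + assert (Hj' : (j <= i)%nat) by lia. destruct (IH Hj').
      split; [eapply Rle_trans; [apply Rmin_l|]; lra
             | eapply Rle_trans; [|apply Rmax_l]; lra].
Qed.

Lemma pmin_att (x : nat -> R) i : exists j, (j <= i)%nat /\ x j = pmin x i.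
Proof.
  induction i as [|i [j [Hj E]]].
  - exists 0%nat; split; [lia|reflexivity].
  - simpl. unfold Rmin. destruct (Rle_dec (pmin x i) (x (S i))).
    + exists j; split; [lia|auto].
    + exists (S i); split; [lia|auto].
Qed.

Lemma pmax_att (x : nat -> R) i : exists j, (j <= i)%nat /\ x j = pmax x i.
Proof.
  induction i as [|i [j [Hj E]]].
  - exists 0%nat; split; [lia|reflexivity].
  - simpl. unfold Rmax. destruct (Rle_dec (pmax x i) (x (S i))).
    + exists (S i); split; [lia|auto].
    + exists j; split; [lia|auto].
Qed.

Lemma Rdiv_le_0_compat a b : 0 <= a -> 0 < b -> 0 <= a / b.
Proof. intros. unfold Rdiv. apply Rmult_le_pos; [auto|]. left; apply Rinv_0_lt_compat; auto. Qed.

Definition M (x : nat -> R) i := Rmax (- pmin x i) (pmax x i).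

Lemma M_mono (x : nat -> R) i : M x i <= M x (S i).
Proof.
  unfold M; simpl.
  pose proof (Rmin_l (pmin x i) (x (S i))). pose proof (Rmax_l (pmax x i) (x (S i))).
  unfold Rmax in *. repeat destruct Rle_dec; lra.
Qed.

Lemma cov_char alpha (x : nat -> R) i y :
  0 < tan alpha -> 0 <= y ->
  (covers_upto alpha x i (0, y) <-> M x i <= y * tan alpha).
Proof.
  intros Ht Hy. unfold covers_upto, covers, M; simpl. split.
  - intro H. destruct (pmin_att x i) as [j1 [H1 E1]].
    destruct (pmax_att x i) as [j2 [H2 E2]].
    destruct (H j1 H1) as [_ A]. destruct (H j2 H2) as [_ B].
    apply Rmax_lub; lra.
  - intros H j Hj. destruct (pbounds x i j Hj).
    pose proof (Rmax_l (- pmin x i) (pmax x i)).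
    pose proof (Rmax_r (- pmin x i) (pmax x i)). split; [auto|lra].
Qed.

Lemma M_nonneg (x : nat -> R) i : x O = 0 -> 0 <= M x i.
Proof.
  intro H0. destruct (pbounds x i 0 ltac:(lia)). unfold M.
  eapply Rle_trans; [|apply Rmax_r]. lra.
Qed.

Lemma P_val alpha x n P i :
  0 < tan alpha -> x O = 0 -> straight_up alpha x n P -> (i <= n)%nat ->
  P i = (0, M x i / tan alpha).
Proof.
  intros Ht H0 HS Hi. destruct (HS i Hi) as [Hf [Hc Hm]].
  destruct (P i) as [a s] eqn:EP. simpl in Hf. subst a. simpl in Hm.
  assert (Hs : 0 <= s) by (destruct (Hc 0%nat ltac:(lia)) as [A _]; exact A).
  apply (cov_char alpha x i s Ht Hs) in Hc.
  pose proof (M_nonneg x i H0).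
  assert (Hy : 0 <= M x i / tan alpha) by (apply Rdiv_le_0_compat; lra).
  specialize (Hm _ Hy). rewrite cov_char in Hm; auto.
  assert (M x i / tan alpha * tan alpha = M x i) by (field; lra).
  specialize (Hm ltac:(lra)).
  assert (M x i / tan alpha <= s).
  { apply (Rmult_le_reg_r (tan alpha)); lra. }
  f_equal; lra.
Qed.

Theorem lemma3 (alpha : R) (x : nat -> R) (n : nat) :
  0 < alpha < PI / 2 ->
  good x n ->
  (exists P, straight_up alpha x n P) /\
  (forall P, straight_up alpha x n P -> cost P n = 1 / tan alpha).
Proof.
  intros [Ha1 Ha2] [[Hn H0] [_ [Hmin Hmax]]].
  assert (Ht : 0 < tan alpha) by (apply tan_gt_0; lra).
  split.
  - exists (fun i => (0, M x i / tan alpha)). intros i Hi.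
    pose proof (M_nonneg x i H0).
    assert (Hy : 0 <= M x i / tan alpha) by (apply Rdiv_le_0_compat; lra).
    split; [reflexivity|]. simpl. split.
    + apply cov_char; auto. right; field; lra.
    + intros y Hy0 Hc. apply cov_char in Hc; auto.
      apply (Rmult_le_reg_r (tan alpha)); auto.
      replace (M x i / tan alpha * tan alpha) with (M x i) by (field; lra). lra.
  - intros P HS.
    assert (Hc : forall k, (k <= n)%nat -> cost P k = M x k / tan alpha).
    { induction k as [|k IH]; intro Hk.
      - simpl. unfold M; simpl. rewrite H0.
        replace (Rmax (-0) 0) with 0 by (unfold Rmax; destruct Rle_dec; lra). field; lra.
      - simpl. rewrite IH by lia.
        rewrite (P_val alpha x n P k Ht H0 HS ltac:(lia)).
        rewrite (P_val alpha x n P (S k) Ht H0 HS Hk).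
        unfold Defs.dist; cbn [fst snd].
        pose proof (M_mono x k).
        replace ((0 - 0) ^ 2 + (M x k / tan alpha - M x (S k) / tan alpha) ^ 2)
          with (((M x (S k) - M x k) / tan alpha) ^ 2) by (field; lra).
        rewrite sqrt_pow2. field; lra.
        apply Rdiv_le_0_compat; lra. }
    rewrite Hc by lia. unfold M. rewrite Hmin.
    replace (Rmax (- -1) (pmax x n)) with 1 by (unfold Rmax; destruct Rle_dec; lra).
    reflexivity.
Qed.
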